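(* Let $\mathcal{N}$ be a Nash equilibrium of $\mathcal{G}_t$ for some $t\in[0,1]$ in which $\Pr[s^r_0]<1$ and $\Pr[s^c_0]<1$. Let $\mathcal{P}$ be the pair of probability distributions over $\{s^r_1,\dots,s^r_n\}$ and $\{s^c_1,\dots,s^c_n\}$ obtained by dividing each $\Pr[s^i_j]$ ($i\in\{r,c\}$, $1\le j\le n$) by $1-\Pr[s^i_0]$. Then $\mathcal{P}$ is a Nash equilibrium of the version of $\mathcal{G}$ in which the column player receives an additional bonus of $\delta\Pr[s^r_0]/(1-\Pr[s^r_0])$ for playing $s^c_k$.
   Context: $\mathcal{G}$ is an $n\times n$ two-player game, with row strategies $s^r_1,\dots,s^r_n$ and column strategies $s^c_1,\dots,s^c_n$, whose payoffs lie in $[0.9,1.1]$; $k\in\{1,\dots,n\}$ is a fixed index and $\delta>0$ a constant. $\mathcal{G}_0$ is the $(n+1)\times(n+1)$ game with strategies $s^r_0,\dots,s^r_n$ and $s^c_0,\dots,s^c_n$ in which each player gets $1$ for playing $s^r_0$ (resp. $s^c_0$) and $0$ for any other strategy. $\mathcal{G}_1$ is the $(n+1)\times(n+1)$ game with payoffs (row, column): $(s^r_0,s^c_0)\mapsto(0,-1)$; $(s^r_0,s^c_j)\mapsto(0,\tfrac34)$ for $j\ge1$, $j\ne k$; $(s^r_0,s^c_k)\mapsto(0,\tfrac34+\delta)$; $(s^r_j,s^c_0)\mapsto(-1,\tfrac34)$ for $j\ge1$; and on $\{s^r_1,\dots,s^r_n\}\times\{s^c_1,\dots,s^c_n\}$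 the payoffs of $\mathcal{G}$. $\mathcal{G}_t=(1-t)\mathcal{G}_0+t\mathcal{G}_1$ (payoffs interpolated linearly). $\Pr[s]$ denotes the probability that the owner of pure strategy $s$ plays $s$ in $\mathcal{N}$. *)

(* Defs.v *)
From mathcomp Require Import all_boot all_order all_algebra.
Set Implicit Arguments. Unset Strict Implicit. Unset Printing Implicit Defensive.
Import Order.TTheory GRing.Theory Num.Theory.
Local Open Scope ring_scope.

Definition mixed (R : numDomainType) (m : nat) (x : 'I_m -> R) : Prop :=
  (forall i, 0 <= x i) /\ \sum_(i < m) x i = 1.

Definition exp_payoff (R : numDomainType) (m m' : nat) (P : 'M[R]_(m, m'))
  (x : 'I_m -> R) (y : 'I_m' -> R) : R :=
  \sum_(i < m) \sum_(j < m') x i * P i j * y j.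

Definition nash (R : numDomainType) (m m' : nat) (A B : 'M[R]_(m, m'))
  (x : 'I_m -> R) (y : 'I_m' -> R) : Prop :=
  mixed x /\ mixed y /\
  (forall x', mixed x' -> exp_payoff A x' y <= exp_payoff A x y) /\
  (forall y', mixed y' -> exp_payoff B x y' <= exp_payoff B x y).

(* Strategy index 0 of 'I_n.+1 is s_0; index (lift ord0 j) is s_{j+1}. *)

Definition G0r (R : ringType) n : 'M[R]_(n.+1, n.+1) :=
  \matrix_(i, j) (if i == ord0 then 1 else 0).
Definition G0c (R : ringType) n : 'M[R]_(n.+1, n.+1) :=
  \matrix_(i, j) (if j == ord0 then 1 else 0).

Definition G1r (R : fieldType) n (A : 'M[R]_n) : 'M[R]_(n.+1, n.+1) :=
  \matrix_(i, j)
    match unlift ord0 i, unlift ord0 j with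
    | None, _ => 0
    | Some _, None => -1
    | Some i', Some j' => A i' j'
    end.
Definition G1c (R : fieldType) n (B : 'M[R]_n) (k : 'I_n) (delta : R)
  : 'M[R]_(n.+1, n.+1) :=
  \matrix_(i, j)
    match unlift ord0 i, unlift ord0 j with
    | None, None => -1
    | None, Some j' => if j' == k then 3/4 + delta else 3/4
    | Some _, None => 3/4
    | Some i', Some j' => B i' j'
    end.

Definition Gtr (R : fieldType) n (A : 'M[R]_n) (t : R) :=
  (1 - t) *: G0r R n + t *: G1r A.
Definition Gtc (R : fieldType) n (B : 'M[R]_n) (k : 'I_n) (delta t : R) :=
  (1 - t) *: G0c R n + t *: G1c B k delta.

Definition cond (R : fieldType) n (x : 'I_n.+1 -> R) : 'I_n -> R :=
  fun j => x (lift ord0 j) / (1 - x ord0).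

Definition bonus_col (R : ringType) n (B : 'M[R]_n) (k : 'I_n) (b : R) : 'M[R]_n :=
  \matrix_(i, j) (B i j + (if j == k then b else 0)).

(* Main.v *)
Require Import Defs.
From mathcomp Require Import all_boot all_order all_algebra.
From mathcomp Require Import ring lra.
Import Order.TTheory GRing.Theory Num.Theory.
Local Open Scope ring_scope.
Section S.
Context {R : realFieldType} {n : nat}.

Lemma exp_split m (M : 'M[R]_(n.+1, m.+1)) x y :
  exp_payoff M x y = x ord0 * (M ord0 ord0 * y ord0 + \sum_(j < m) M ord0 (lift ord0 j) * y (lift ord0 j))
   + \sum_(i < n) x (lift ord0 i) * (M (lift ord0 i) ord0 * y ord0 + \sum_(j < m) M (lift ord0 i) (lift ord0 j) * y (lift ord0 j)).
Proof.
rewrite /exp_payoff big_ord_recl; congr (_ + _).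
  rewrite big_ord_recl [RHS]mulrDr mulr_sumr mulrA; congr (_ + _); apply eq_bigr=> j _; by rewrite mulrA.
apply eq_bigr => i _; rewrite big_ord_recl [RHS]mulrDr mulr_sumr mulrA; congr (_ + _); apply eq_bigr=> j _; by rewrite mulrA.
Qed.

Lemma exp_scalel m m' (M : 'M[R]_(m, m')) c x y :
  exp_payoff M (fun i => c * x i) y = c * exp_payoff M x y.
Proof.
rewrite /exp_payoff mulr_sumr; apply eq_bigr=> i _; rewrite mulr_sumr; apply eq_bigr=> j _; ring.
Qed.
Lemma exp_scaler m m' (M : 'M[R]_(m, m')) c x y :
  exp_payoff M x (fun i => c * y i) = c * exp_payoff M x y.
Proof.
rewrite /exp_payoff mulr_sumr; apply eq_bigr=> i _; rewrite mulr_sumr; apply eq_bigr=> j _; ring.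
Qed.

Lemma lneq m (i : 'I_m) : (lift ord0 i == ord0) = false.
Proof. by rewrite eq_sym (negbTE (neq_lift _ _)). Qed.
Lemma Gtr00 (A : 'M[R]_n) t j : Gtr A t ord0 j = 1 - t.
Proof. by rewrite !mxE eqxx unlift_none; ring. Qed.
Lemma Gtr10 (A : 'M[R]_n) t i : Gtr A t (lift ord0 i) ord0 = - t.
Proof. by rewrite !mxE lneq liftK unlift_none; ring. Qed.
Lemma Gtr11 (A : 'M[R]_n) t i j : Gtr A t (lift ord0 i) (lift ord0 j) = t * A i j.
Proof. by rewrite !mxE lneq !liftK; ring. Qed.
Lemma Gtc00 (B : 'M[R]_n) k d t : Gtc B k d t ord0 ord0 = 1 - t - t.
Proof. by rewrite !mxE eqxx unlift_none; ring. Qed.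
Lemma Gtc01 (B : 'M[R]_n) k d t j : Gtc B k d t ord0 (lift ord0 j) = t * (3/4 + (if j == k then d else 0)).
Proof. rewrite !mxE lneq unlift_none liftK; case: (j == k); ring. Qed.
Lemma Gtc10 (B : 'M[R]_n) k d t i : Gtc B k d t (lift ord0 i) ord0 = 1 - t + t * (3/4).
Proof. by rewrite !mxE eqxx liftK unlift_none; ring. Qed.
Lemma Gtc11 (B : 'M[R]_n) k d t i j : Gtc B k d t (lift ord0 i) (lift ord0 j) = t * B i j.
Proof. by rewrite !mxE lneq !liftK; ring. Qed.

Lemma row_pay (A : 'M[R]_n) t (x y : 'I_n.+1 -> R) c (p : 'I_n -> R) :
  (forall i, x (lift ord0 i) = c * p i) ->
  exp_payoff (Gtr A t) x y = x ord0 * (1-t) * (y ord0 + \sum_j y (lift ord0 j))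
    + c * t * (- y ord0 * \sum_i p i + exp_payoff A p (fun j => y (lift ord0 j))).
Proof.
move=> hx; rewrite exp_split Gtr00.
under eq_bigr do rewrite Gtr00.
under [X in _ + X]eq_bigr do rewrite Gtr10 hx.
under [X in _ + X]eq_bigr => i _ do under eq_bigr do rewrite Gtr11.
rewrite -mulr_sumr; congr (_ + _); first ring.
rewrite /exp_payoff [RHS]mulrDr !mulr_sumr -big_split; apply eq_bigr => i _ /=.
have -> : \sum_(j < n) t * A i j * y (lift ord0 j) = t * \sum_(j < n) A i j * y (lift ord0 j).
  by rewrite mulr_sumr; apply eq_bigr=> j _; ring.
have -> : \sum_(j < n) p i * A i j * y (lift ord0 j) = p i * \sum_(j < n) A i j * y (lift ord0 j).
  by rewrite mulr_sumr; apply eq_bigr=> j _; ring.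
ring.
Qed.

Lemma col_pay (B : 'M[R]_n) k d t (x y : 'I_n.+1 -> R) c (q : 'I_n -> R) :
  (forall j, y (lift ord0 j) = c * q j) ->
  exp_payoff (Gtc B k d t) x y = y ord0 * (x ord0 * (1 - t - t) + \sum_i x (lift ord0 i) * (1 - t + t * (3/4)))
    + c * t * (x ord0 * (3/4 * \sum_j q j + d * q k) + exp_payoff B (fun i => x (lift ord0 i)) q).
Proof.
move=> hy; rewrite exp_split Gtc00.
under eq_bigr do rewrite Gtc01 hy.
under [X in _ + X]eq_bigr do rewrite Gtc10.
under [X in _ + X]eq_bigr => i _ do under eq_bigr do rewrite Gtc11 hy.
have -> : \sum_(j < n) t * (3 / 4 + (if j == k then d else 0)) * (c * q j)
   = c * t * (3/4 * \sum_j q j) + c * t * d * q k.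
  rewrite (bigD1 k) //= eqxx (bigD1 k (P := xpredT)) //=.
  have -> : \sum_(i < n | i != k) t * (3 / 4 + (if i == k then d else 0)) * (c * q i)
    = c * t * (3 / 4) * \sum_(i < n | i != k) q i.
    by rewrite mulr_sumr; apply eq_bigr => i /negbTE ->; ring.
  ring.
rewrite /exp_payoff.
have -> : \sum_(i < n) x (lift ord0 i) * ((1 - t + t * (3 / 4)) * y ord0 + \sum_(j < n) t * B i j * (c * q j))
  = y ord0 * \sum_i x (lift ord0 i) * (1 - t + t * (3/4)) + c * t * \sum_(i < n) \sum_(j < n) x (lift ord0 i) * B i j * q j.
  rewrite !mulr_sumr -big_split; apply eq_bigr => i _ /=.
  rewrite !mulr_sumr mulrDr mulr_sumr; congr (_ + _); first ring.
  by apply eq_bigr => j _; ring.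
ring.
Qed.

Lemma bonus_pay (B : 'M[R]_n) k b p q :
  exp_payoff (bonus_col B k b) p q = exp_payoff B p q + b * (\sum_i p i) * q k.
Proof.
rewrite /exp_payoff mulr_sumr mulr_suml -big_split; apply eq_bigr => i _ /=.
rewrite (bigD1 k) //= (bigD1 k (P := xpredT)) //= !mxE eqxx.
have -> : \sum_(j < n | j != k) p i * bonus_col B k b i j * q j = \sum_(j < n | j != k) p i * B i j * q j.
  by apply eq_bigr => j /negbTE h; rewrite !mxE h addr0.
ring.
Qed.
Lemma exp_extl m m' (M : 'M[R]_(m, m')) x x' y :
  (forall i, x i = x' i) -> exp_payoff M x y = exp_payoff M x' y.
Proof. by move=> h; apply eq_bigr=> i _; apply eq_bigr=> j _; rewrite h. Qed.
Lemma exp_extr m m' (M : 'M[R]_(m, m')) x y y' :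
  (forall i, y i = y' i) -> exp_payoff M x y = exp_payoff M x y'.
Proof. by move=> h; apply eq_bigr=> i _; apply eq_bigr=> j _; rewrite h. Qed.

Lemma cond_mixed (x : 'I_n.+1 -> R) : mixed x -> x ord0 < 1 ->
  mixed (cond x) /\ (forall i, x (lift ord0 i) = (1 - x ord0) * cond x i)
  /\ x ord0 + \sum_i x (lift ord0 i) = 1.
Proof.
move=> [x0 xs] hx1.
have hp : 0 < 1 - x ord0 by rewrite subr_gt0.
have hs : x ord0 + \sum_i x (lift ord0 i) = 1 by rewrite -xs big_ord_recl.
split; last split => //.
- split.
    by move=> i; rewrite /cond divr_ge0 // ltW.
  rewrite /cond -mulr_suml.
  have -> : \sum_i x (lift ord0 i) = 1 - x ord0 by rewrite -hs; ring.
  by rewrite mulfV // gt_eqF.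
- by move=> i; rewrite /cond; field; rewrite gt_eqF.
Qed.

Lemma ext_mixed (a : R) (p : 'I_n -> R) : 0 <= a <= 1 -> mixed p ->
  let x := fun i : 'I_n.+1 => if unlift ord0 i is Some i' then (1 - a) * p i' else a in
  [/\ mixed x, x ord0 = a & forall i, x (lift ord0 i) = (1 - a) * p i].
Proof.
move=> /andP[a0 a1] [p0 ps] x.
have e0 : x ord0 = a by rewrite /x unlift_none.
have e1 : forall i, x (lift ord0 i) = (1 - a) * p i by move=> i; rewrite /x liftK.
split => //; split.
  move=> i; rewrite /x; case: (unlift ord0 i) => [i'|] //.
  by rewrite mulr_ge0 // subr_ge0.
rewrite big_ord_recl e0.
under eq_bigr do rewrite e1.
by rewrite -mulr_sumr ps; ring.
Qed.
End S.

Theorem lemma2 (R : realFieldType) (n : nat) (A B : 'M[R]_n) (k : 'I_n)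
  (delta t : R) (x y : 'I_n.+1 -> R) :
  (forall i j, 9/10 <= A i j <= 11/10) ->
  (forall i j, 9/10 <= B i j <= 11/10) ->
  0 < delta ->
  0 <= t <= 1 ->
  nash (Gtr A t) (Gtc B k delta t) x y ->
  x ord0 < 1 -> y ord0 < 1 ->
  nash A (bonus_col B k (delta * x ord0 / (1 - x ord0))) (cond x) (cond y).
Proof.
move=> _ _ hd /andP[t0 t1] [mx [my [hr hc]]] hx1 hy1.
have [[px0 pxs] [hx hsx]] := cond_mixed x mx hx1.
have [[py0 pys] [hy hsy]] := cond_mixed y my hy1.
have cx : 0 < 1 - x ord0 by rewrite subr_gt0.
have cy : 0 < 1 - y ord0 by rewrite subr_gt0.
have x0ge : 0 <= x ord0 by case: mx.
have y0ge : 0 <= y ord0 by case: my.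
have tpos : 0 < t.
  rewrite lt_def t0 andbT; apply/eqP => tz.
  have [me e0 e1] := ext_mixed 1 (cond x) (ltac:(by rewrite ler01 lexx)) (conj px0 pxs).
  have := hr _ me.
  rewrite (row_pay A t _ y _ _ e1) (row_pay A t _ y _ _ hx) e0 hsy tz.
  move=> h; have : 1 <= x ord0 by move: h; rewrite subrr subr0 !mulr0 !mul0r !addr0 !mulr1.
  by rewrite leNgt hx1.
split; first by split.
split; first by split.
split.
- move=> p' mp.
  have [mx' e0 e1] := ext_mixed (x ord0) p' (ltac:(by rewrite x0ge ltW)) mp.
  have := hr _ mx'.
  rewrite (row_pay A t _ y _ _ e1) (row_pay A t _ y _ _ hx) e0.
  rewrite (exp_extr _ _ _ p' _ _ hy) (exp_extr _ _ _ (cond x) _ _ hy) !exp_scaler.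
  case: mp => _ ->; rewrite pxs lerD2l ler_pM2l ?mulr_gt0 // lerD2l ler_pM2l //.
- move=> q' mq.
  have [my' e0 e1] := ext_mixed (y ord0) q' (ltac:(by rewrite y0ge ltW)) mq.
  have := hc _ my'.
  rewrite (col_pay B k delta t x _ _ _ e1) (col_pay B k delta t x _ _ _ hy) e0.
  rewrite (exp_extl _ _ _ _ _ q' hx) (exp_extl _ _ _ _ _ (cond y) hx) !exp_scalel.
  case: mq => _ ->; rewrite pys lerD2l ler_pM2l ?mulr_gt0 // !bonus_pay pxs.
  rewrite -(ler_pM2l cx).
  have e : forall E (r : R), (1 - x ord0) * (E + delta * x ord0 / (1 - x ord0) * 1 * r)
     = (x ord0 * (3 / 4 * 1 + delta * r) + (1 - x ord0) * E) - x ord0 * (3/4).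
    by move=> E r; field; rewrite gt_eqF.
  by rewrite !e lerD2r.
Qed.
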